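(* Let $T$ be a rooted binary tree with black/white-coloured leaves and the induced node colouring and classification as described in the context, and suppose $T$ contains more than one maximal black subtree. Then no SPR operation on $T$ belonging to the class $(\mathrm{W},\mathrm{b},\mathrm{B},\ast)$, $(\mathrm{W},\mathrm{b},\mathrm{W},\ast)$ or $(\mathrm{W},\mathrm{b},\mathrm{G},\ast)$ produces a compatible tree.
   Context: All trees are rooted binary trees; every non-leaf node has exactly two children and every non-root node $n$ has a parent $\mathrm{pa}(n)$. A ''subtree'' always means a node together with all of its descendants. Colouring: each leaf is coloured black (B) or white (W); an internal node is black if both children are black, white if both children are white, and grey (G) otherwise. A subtree is black (resp. white) if all its nodes are black (resp. white); it is maximal if no strictly larger subtree containing it is black (resp. white). Classification: a black or white node is of type ''r'' if it is the root of a maximal subtree of its own colour, and of type ''b'' otherwise; all grey nodes are of type ''b'' by convention. A tree is compatible if it contains at most one maximal black subtree. SPR operation $(u,v)$ on $T$: $u$ is a non-root node, $v$ is a node with $v\notin\{u,\mathrm{pa}(u)\}$ and $v$ not a descendant of $u$; the subtree rooted at $u$ is pruned (the edge to $u$ is removed and $\mathrm{pa}(u)$ deleted, its other child taking its place), then regrafted by inserting a new node on the edge from $v$ to its parent (or as a new root above $v$ if $v$ is the root) whose two children are $v$ and $u$; colours of the resulting tree are recomputed by the same rule. The operation belongs to class $(x,y,z,w)$ where $x,z\in\{\mathrm{B},\mathrm{W},\mathrm{G}\}$ are the colours in $T$ of $u$ and $v$, and $y,w\in\{\mathrm{r},\mathrm{b}\}$ their classifications in $T$; $\ast$ denotes any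 value. *)

(* Defs.v *)
From mathcomp Require Import all_boot.
Set Implicit Arguments. Unset Strict Implicit. Unset Printing Implicit Defensive.

Inductive colour := B | W | G.

(* Rooted binary trees; leaves carry a colour bit (true = black, false = white). *)
Inductive tree := Leaf of bool | Node of tree & tree.

Fixpoint colour_of (t : tree) : colour :=
  match t with
  | Leaf true => B
  | Leaf false => W
  | Node l r =>
      match colour_of l, colour_of r with
      | B, B => B
      | W, W => W
      | _, _ => G
      end
  end.

(* Nodes are addressed by paths from the root (false = left, true = right).
   subtree t p = the subtree rooted at node p, if p is a node of t. *)
Fixpoint subtree (t : tree) (p : seq bool) : option tree :=
  match p with
  | [::] => Some t
  | b :: p' => match t with
               | Leaf _ => None
               | Node l r => subtree (if b then r else l) p'
               end
  end.

Definition is_node (t : tree) (p : seq bool) : Prop := subtree t p <> None.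

Definition node_colour (t : tree) (p : seq bool) : option colour :=
  omap colour_of (subtree t p).

Fixpoint all_nodes_col (c : colour) (t : tree) : Prop :=
  colour_of t = c /\
  match t with
  | Leaf _ => True
  | Node l r => all_nodes_col c l /\ all_nodes_col c r
  end.

Definition mono_subtree (t : tree) (p : seq bool) (c : colour) : Prop :=
  exists s, subtree t p = Some s /\ all_nodes_col c s.

(* maximal: no strictly larger subtree containing it (= subtree rooted at a
   proper ancestor) has the same colour property *)
Definition maximal_mono (t : tree) (p : seq bool) (c : colour) : Prop :=
  mono_subtree t p c /\
  forall q, prefix q p -> q <> p -> ~ mono_subtree t q c.

(* classification "r"; every other node (incl. grey) is of type "b" *)
Definition type_r (t : tree) (p : seq bool) : Prop :=
  (node_colour t p = Some B /\ maximal_mono t p B) \/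
  (node_colour t p = Some W /\ maximal_mono t p W).

Definition type_b (t : tree) (p : seq bool) : Prop := is_node t p /\ ~ type_r t p.

Definition compatible (t : tree) : Prop :=
  forall p q, maximal_mono t p B -> maximal_mono t q B -> p = q.

Definition parent (u : seq bool) : seq bool := take (size u).-1 u.

(* remove the subtree at u (u non-root); pa(u) is replaced by the sibling *)
Fixpoint prune (t : tree) (u : seq bool) : tree :=
  match u with
  | [::] => t
  | b :: u' =>
      match t with
      | Leaf _ => t
      | Node l r =>
          if u' is [::] then (if b then l else r)
          else if b then Node l (prune r u') else Node (prune l u') r
      end
  end.

(* position, in the pruned tree, of a node v of t (v not in subtree of u,
   v <> pa(u)): nodes in the sibling's subtree move up one level *)
Definition remap (u v : seq bool) : seq bool :=
  let a := parent u in
  let b := last false u in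
  if prefix (rcons a (~~ b)) v then a ++ drop (size a).+1 v else v.

(* insert a new node on the edge above v (new root if v is the root),
   with children v and s *)
Fixpoint graft (t : tree) (v : seq bool) (s : tree) : tree :=
  match v with
  | [::] => Node t s
  | b :: v' =>
      match t with
      | Leaf _ => t
      | Node l r => if b then Node l (graft r v' s) else Node (graft l v' s) r
      end
  end.

Definition spr (t : tree) (u v : seq bool) : tree :=
  match subtree t u with
  | Some s => graft (prune t u) (remap u v) s
  | None => t
  end.

Definition spr_valid (t : tree) (u v : seq bool) : Prop :=
  [/\ is_node t u, u <> [::], is_node t v,
      v <> u /\ v <> parent u & ~ prefix u v].

(* Main.v *)
Require Import Defs.
From mathcomp Require Import all_boot.
From Stdlib Require Import Classical.
Set Implicit Arguments. Unset Strict Implicit.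

Definition mbN (c : colour) (ml mr : seq (seq bool)) :=
  if c is B then [:: [::]] else map (cons false) ml ++ map (cons true) mr.

Fixpoint mb (t : tree) : seq (seq bool) :=
  match t with
  | Leaf b => if b then [:: [::]] else [::]
  | Node l r => mbN (colour_of (Node l r)) (mb l) (mb r)
  end.

Lemma mbNodeE l r : mb (Node l r) = mbN (colour_of (Node l r)) (mb l) (mb r).
Proof. by []. Qed.

Lemma col_node l r c : colour_of (Node l r) = c -> c <> G ->
  colour_of l = c /\ colour_of r = c.
Proof.
rewrite /=; case: (colour_of l); case: (colour_of r); case: c => //.
Qed.

Lemma colB_node l r : colour_of l = B -> colour_of r = B -> colour_of (Node l r) = B.
Proof. by rewrite /= => -> ->. Qed.

Lemma col_all t c : colour_of t = c -> c <> G -> all_nodes_col c t.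
Proof.
elim: t => [b|l IHl r IHr] /= H Hc; first by split.
split; first by [].
have [Hl Hr] := col_node H Hc.
by split; [apply: IHl | apply: IHr].
Qed.

Lemma all_col t c : all_nodes_col c t -> colour_of t = c.
Proof. by case: t => [?|? ?] []. Qed.

Lemma sub_col p t s c : c <> G -> colour_of t = c -> subtree t p = Some s ->
  colour_of s = c.
Proof.
elim: p t => [|b p IH] [b'|l r] Hc Ht //=.
- by case=> <-.
- by case=> <-.
- have [Hl Hr] := col_node Ht Hc.
  by case: b; apply: IH.
Qed.

Lemma subtree_cat t q r :
  subtree t (q ++ r) = obind (fun s => subtree s r) (subtree t q).
Proof.
elim: q t => [|b q IH] [b'|l r'] //=.
Qed.

Lemma mbW t : colour_of t = W -> mb t = [::].
Proof.
elim: t => [[]|l IHl r IHr] //= H.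
have [Hl Hr] := col_node H (fun e => match e with end).
rewrite /mbN IHl // IHr //.
move: H => /= ->. by [].
Qed.

Lemma mbB t : colour_of t = B -> mb t = [:: [::]].
Proof.
case: t => [[]|l r] //= H.
by rewrite /mbN; move: H => /= ->.
Qed.

Lemma size_mb_node l r :
  size (mb (Node l r)) =
  if colour_of (Node l r) is B then 1 else size (mb l) + size (mb r).
Proof.
rewrite mbNodeE /mbN.
case: (colour_of (Node l r)) => //; by rewrite size_cat !size_map.
Qed.

Lemma nil_mb t : [::] \in mb t <-> colour_of t = B.
Proof.
case: t => [[]|l r]; [by split | by split | rewrite mbNodeE].
rewrite /mbN; case: (colour_of (Node l r)) => /=; [by split | | ]; rewrite mem_cat;
 split=> //; case/orP=> /mapP [x _] //.
Qed.

Lemma cons_mb l r b p :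
  (b :: p) \in mb (Node l r) <->
  colour_of (Node l r) <> B /\ p \in mb (if b then r else l).
Proof.
rewrite mbNodeE /mbN.
case: (colour_of (Node l r)) => /=; [ by split => // [[]] | | ]; rewrite mem_cat; (split;
 [ case/orP => /mapP [x Hx [E1 E2]]; subst; split=> //
 | case=> _ Hp; apply/orP; case: b Hp => Hp; [right|left]; apply/mapP; by exists p]).
Qed.

Lemma max_cons l r b p :
  maximal_mono (Node l r) (b :: p) B <->
  colour_of (Node l r) <> B /\ maximal_mono (if b then r else l) p B.
Proof.
split.
- case=> [[s [Hs Ha]] Hmax]; split.
  + move=> HB; apply: (Hmax [::]) => //.
    exists (Node l r); split=> //; exact: col_all.
  + split; first by exists s.
    move=> q Hq Hne Hm; apply: (Hmax (b :: q)).
    * by rewrite prefix_cons eqxx Hq.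
    * by case.
    * exact: Hm.
- case=> [HnB [[s [Hs Ha]] Hmax]]; split; first by exists s.
  move=> [|b' q] Hq Hne [s' [Hs' Ha']].
  + move: Hs' => [] E; subst s'. exact: HnB (all_col Ha').
  + move: Hq; rewrite prefix_cons => /andP [/eqP Eb Hq]; subst b'.
    apply: (Hmax q Hq); first by move=> E; apply: Hne; rewrite E.
    by exists s'.
Qed.

Lemma maxB_iff p t : maximal_mono t p B <-> p \in mb t.
Proof.
elim: p t => [|b p IH] t.
- rewrite nil_mb; split.
  + move=> [[s [Hs Ha]] _]; rewrite -(all_col Ha); by case: t Hs => [c|l r] [->].
  + move=> H; split; first by exists t; split; [by case: t H | exact: col_all].
    by move=> q; rewrite prefixs0 => /eqP.
- case: t => [c|l r].
  + split; first by move=> [[s [Hs _]] _].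
    by case: c.
  + by rewrite max_cons cons_mb IH.
Qed.

Lemma uniq_mb t : uniq (mb t).
Proof.
elim: t => [[]|l IHl r IHr] //.
rewrite mbNodeE /mbN; case: (colour_of (Node l r)) => //;
rewrite cat_uniq !map_inj_uniq ?IHl ?IHr //=; try (by move=> x y []);
rewrite andbT; apply/hasPn => x /mapP [y _ ->]; apply/negP => /mapP [z _] [] //.

Qed.

Lemma graft_lem t v s : colour_of s = W ->
  (colour_of (graft t v s) = B -> colour_of t = B) /\
  size (mb t) <= size (mb (graft t v s)).
Proof.
move=> Hs.
have hroot : forall t0, colour_of (Node t0 s) <> B.
  by move=> t0; rewrite /= Hs; case: (colour_of t0).
have rootcase : forall t0, (colour_of (Node t0 s) = B -> colour_of t0 = B) /\
  size (mb t0) <= size (mb (Node t0 s)).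
  move=> t0; split; first by move=> HH; exfalso; exact: hroot HH.
  rewrite size_mb_node; case E: (colour_of (Node t0 s)) => //;
   try (by exfalso; exact: hroot E); by rewrite leq_addr.
elim: t v => [c|l IHl r IHr] [|b v].
- exact: rootcase.
- by [].
- exact: rootcase.
- case: b.
  + have [IC IS] := IHr v.
    have Hcol : colour_of (Node l (graft r v s)) = B -> colour_of (Node l r) = B.
      move=> H; have [Hl Hr] := col_node H (fun e => match e with end).
      by apply: colB_node => //; apply: IC.
    change (graft (Node l r) (true :: v) s) with (Node l (graft r v s)).
    split=> //.
    rewrite !size_mb_node.
    case E: (colour_of (Node l (graft r v s))).
    * by rewrite (Hcol E).
    * case E2: (colour_of (Node l r)) => //.
      have [Hl _] := col_node E2 (fun e => match e with end).
      by rewrite (mbB Hl) /= (leq_trans _ (leq_addr _ _)).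
      by rewrite leq_add2l.
      by rewrite leq_add2l.
    * case E2: (colour_of (Node l r)) => //.
      have [Hl _] := col_node E2 (fun e => match e with end).
      by rewrite (mbB Hl) /= (leq_trans _ (leq_addr _ _)).
      by rewrite leq_add2l.
      by rewrite leq_add2l.
  + have [IC IS] := IHl v.
    have Hcol : colour_of (Node (graft l v s) r) = B -> colour_of (Node l r) = B.
      move=> H; have [Hl Hr] := col_node H (fun e => match e with end).
      by apply: colB_node => //; apply: IC.
    change (graft (Node l r) (false :: v) s) with (Node (graft l v s) r).
    split=> //.
    rewrite !size_mb_node.
    case E: (colour_of (Node (graft l v s) r)).
    * by rewrite (Hcol E).
    * case E2: (colour_of (Node l r)) => //.
      have [_ Hr] := col_node E2 (fun e => match e with end).
      by rewrite (mbB Hr) /= addn1.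
      by rewrite leq_add2r.
      by rewrite leq_add2r.
    * case E2: (colour_of (Node l r)) => //.
      have [_ Hr] := col_node E2 (fun e => match e with end).
      by rewrite (mbB Hr) /= addn1.
      by rewrite leq_add2r.
      by rewrite leq_add2r.
Qed.

Lemma prune_lem a x t w : subtree t a = Some w -> colour_of w = W ->
  colour_of (prune t (rcons a x)) = colour_of t /\
  size (mb (prune t (rcons a x))) = size (mb t).
Proof.
elim: a t => [|b a IH] [c|l r] //=.
- move=> [<-] Hw.
  have [Hl Hr] := col_node Hw (fun e => match e with end).
  rewrite Hl Hr /= (mbW Hl) (mbW Hr); by case: x; rewrite ?Hl ?Hr ?mbW.
- case E: (rcons a x) => [|y z]; first by move: E; case: (a) => [|? ?].
  move=> Hsub Hw.
  case: b Hsub => Hsub.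
  + have [IC IS] := IH r Hsub Hw.
    change (prune (Node l r) [:: true, y & z]) with (Node l (prune r (y :: z))).
    rewrite -E.
    have HC : colour_of (Node l (prune r (rcons a x))) = colour_of (Node l r)
      by rewrite /= IC.
    by rewrite HC !size_mb_node HC IS.
  + have [IC IS] := IH l Hsub Hw.
    change (prune (Node l r) [:: false, y & z]) with (Node (prune l (y :: z)) r).
    rewrite -E.
    have HC : colour_of (Node (prune l (rcons a x)) r) = colour_of (Node l r)
      by rewrite /= IC.
    by rewrite HC !size_mb_node HC IS.
Qed.

Lemma two_size (p q : seq bool) s : p \in s -> q \in s -> p <> q -> 1 < size s.
Proof.
case: s => [|x [|y s']] //=.
by rewrite !inE => /eqP -> /eqP ->.
Qed.

Theorem lemma4 (t : tree) :
  (exists p q, p <> q /\ maximal_mono t p B /\ maximal_mono t q B) ->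
  forall u v : seq bool,
    spr_valid t u v ->
    node_colour t u = Some W -> type_b t u ->
    (node_colour t v = Some B \/ node_colour t v = Some W \/
     node_colour t v = Some G) ->
    ~ compatible (spr t u v).
Proof.
move=> [p [q [Hpq [Hp Hq]]]] u v [Hu Hu0 Hv _ _] Hcu [_ Hnr] _ Hcomp.
have H2 : 1 < size (mb t).
  by apply: (two_size (p:=p) (q:=q)) => //; apply/maxB_iff.
move: Hcu; rewrite /node_colour; case Es: (subtree t u) => [s|] //= [Hs].
have [a [x Eu]] : exists a x, u = rcons a x.
  by case/lastP: u Hu0 {Hu Es Hnr Hcomp} => [|a x] // _; exists a, x.
have [w [Ew Hw]] : exists w, subtree t a = Some w /\ colour_of w = W.
  have [w' Ew'] : exists w', subtree t a = Some w'.
    move: Es; rewrite Eu -cats1 subtree_cat.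
    by case: (subtree t a) => [w'|] //; exists w'.
  have [q0 [Hq0 [Hne [sq [Hsq Hasq]]]]] :
      exists q0, prefix q0 u /\ q0 <> u /\ mono_subtree t q0 W.
    apply: NNPP => Hno; apply: Hnr; right; split.
      by rewrite /node_colour Es /= Hs.
    split; first by exists s; split=> //; apply: col_all.
    move=> q1 Hq1 Hne1 Hm1; apply: Hno; by exists q1.
  move/prefixP: Hq0 => [r Er].
  case/lastP: r Er Hne => [|r' y] Er Hne.
    by exfalso; apply: Hne; rewrite Er cats0.
  move: Er; rewrite Eu -rcons_cat => /rcons_inj [Ea _].
  exists w'; split=> //.
  move: Ew'; rewrite Ea subtree_cat Hsq /= => Ew'.
  exact: (sub_col (p:=r') (t:=sq)) (all_col Hasq) Ew'.
have [_ HP] := prune_lem x Ew Hw.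
have [_ HG] := graft_lem (prune t u) (remap u v) Hs.
have H2' : 1 < size (mb (spr t u v)).
  rewrite /spr Es; apply: leq_trans HG; by rewrite Eu HP.
have U := uniq_mb (spr t u v).
move: H2' U; case: (mb (spr t u v)) (fun p => maxB_iff p (spr t u v)) =>
  [|x1 [|x2 l']] //= Hiff _ /andP [Hn _].
have I2 : x2 \in [:: x1, x2 & l'] by rewrite inE mem_head orbT.
have E12 := Hcomp x1 x2 (proj2 (Hiff x1) (mem_head _ _)) (proj2 (Hiff x2) I2).
by move: Hn; rewrite E12 inE eqxx.
Qed.
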